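(* For every integer $k\geq 3$, every extremal square-free word over an alphabet with exactly $k$ letters has length greater than $\left(\frac{5}{4}\right)^{k/4}$.
   Context: A word is a finite sequence of letters. A factor of $W$ is a word $U$ with $W=W_1UW_2$ for some (possibly empty) words $W_1,W_2$. A square is a nonempty word of the form $XX$; a word is square-free if none of its factors is a square. An extension of a word $W$ over an alphabet $\mathbb{A}$ is any word $W_1xW_2$ where $W=W_1W_2$ ($W_1,W_2$ possibly empty) and $x\in\mathbb{A}$. A word $W$ over $\mathbb{A}$ is extremal square-free if $W$ is square-free and every extension of $W$ (over $\mathbb{A}$) contains a square as a factor. *)

(* Defs.v *)
From mathcomp Require Import all_boot.
From Stdlib Require Import Reals.

Set Implicit Arguments.
Unset Strict Implicit.
Unset Printing Implicit Defensive.

Definition is_factor (T : Type) (U W : seq T) : Prop :=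
  exists W1 W2 : seq T, W = W1 ++ U ++ W2.

Definition is_square (T : Type) (U : seq T) : Prop :=
  exists X : seq T, X <> [::] /\ U = X ++ X.

Definition square_free (T : Type) (W : seq T) : Prop :=
  forall U : seq T, is_factor U W -> ~ is_square U.

Definition is_extension (T : Type) (V W : seq T) : Prop :=
  exists (W1 W2 : seq T) (x : T), W = W1 ++ W2 /\ V = W1 ++ x :: W2.

Definition extremal_square_free (T : Type) (W : seq T) : Prop :=
  square_free W /\
  forall V : seq T, is_extension V W -> exists U : seq T, is_factor U V /\ is_square U.

(* Main.v *)
Require Import Defs.
From mathcomp Require Import all_boot.
From Stdlib Require Import Reals Lra.
From mathcomp Require Import zify.

Section Aux.
Variable T : eqType.

Lemma sq_of_period (x0 : T) (W : seq T) s d :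
  0 < d -> s + d + d <= size W ->
  (forall t, t < d -> nth x0 W (s + t) = nth x0 W (s + d + t)) ->
  ~ square_free W.
Proof.
move=> d0 hs ht sf.
set X := take d (drop s W).
have HX : take d (drop (s + d) W) = X.
  apply: (@eq_from_nth _ x0).
    rewrite /X !size_take !size_drop; do 2 case: ifP => ?; lia.
  move=> i; rewrite size_take size_drop => hi.
  have hid : i < d by apply: leq_trans hi (geq_minl _ _).
  rewrite /X !nth_take // !nth_drop; by rewrite ht.
apply: (sf (X ++ X)); last first.
  exists X; split=> //.
  move=> HX0; have : size X = d.
    rewrite /X size_take size_drop; case: ifP => ?; lia.
  by rewrite HX0 /= => h; move: d0; rewrite -h.
exists (take s W), (drop (s + d + d) W).
rewrite -{1}(cat_take_drop s W); congr (_ ++ _).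
rewrite -{1}(cat_take_drop d (drop s W)) drop_drop -/X -catA; congr (_ ++ _).
rewrite -{1}(cat_take_drop d (drop (d + s) W)) drop_drop (addnC d s) HX.
by rewrite (addnC d (s + d)).
Qed.
End Aux.

Section Main.
Variable T : eqType.
Variable x0 : T.
Variable W : seq T.
Let n := size W.
Let w j := nth x0 W j.

Definition valid p := [&& 0 < p, p + p <= n.+1 & all (fun j => w j == w (j + p)) (iota 0 p.-1)].

Lemma valid_ord p q : square_free W -> valid p -> valid q -> p < q -> 3 * p <= 2 * q.
Proof.
move=> sf /and3P[p0 pn /allP pa] /and3P[q0 qn /allP qa] pq.
rewrite leqNgt; apply/negP => hlt.
set d := q - p.
have d0 : 0 < d by rewrite subn_gt0.
have hd : d + d < p by rewrite /d; lia.
apply: (@sq_of_period _ x0 W p d d0).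
- rewrite /n in qn; lia.
- move=> t ht.
  have e1 : w t = w (t + p).
    apply/eqP; apply: pa; rewrite mem_iota /=; lia.
  have e2 : w t = w (t + q).
    apply/eqP; apply: qa; rewrite mem_iota /=; lia.
  rewrite /w in e1 e2.
  have -> : p + t = t + p by rewrite addnC.
  have -> : p + d + t = t + q by rewrite /d; lia.
  by rewrite -e1 -e2.
- exact: sf.
Qed.

Lemma chain a s : square_free W -> path ltn a s -> all valid (a :: s) ->
  3 ^ (size s) * a <= 2 ^ (size s) * last a s.
Proof.
move=> sf; elim: s a => [|b s IH] a; first by move=> _ _; change (1 * a <= 1 * a); rewrite leqnn.
move=> /andP[ab pb] /and3P[va vb vs].
change (3 ^ (size s).+1 * a <= 2 ^ (size s).+1 * last b s).
have h := valid_ord _ _ sf va vb ab.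
have := IH b pb (introT andP (conj vb vs)).
rewrite !Nat.pow_succ_r'; set L := last b s; set M := 3 ^ size s; set N := 2 ^ size s => hI.
nia.
Qed.

End Main.
Arguments valid {T}.
Arguments chain {T x0 W a s}.

Lemma key (T : finType) (x0 : T) {W : seq T} :
  extremal_square_free W -> forall x : T,
  exists p, valid x0 W p && (nth x0 W p.-1 == x).
Proof.
move=> [sf ext] x.
have [U [[V1 [V2 hV]] [X [hX hU]]]] : exists U, is_factor U (x :: W) /\ is_square U.
  apply: ext; by exists [::], W, x.
case: V1 hV => [|y V1] /= hV; last first.
  exfalso; apply: (sf U); last by exists X.
  exists V1, V2; by case: hV.
case: X hX hU => [//|c B] _ hU; subst U.
case: hV => <- hW.
exists (size B).+1; rewrite /= hW -catA.
apply/andP; split; last by rewrite nth_cat ltnn subnn.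
apply/and3P; split => //.
  rewrite size_cat /= size_cat; lia.
apply/allP => j; rewrite mem_iota add0n => /andP[_ hj].
rewrite nth_cat hj nth_cat.
have -> : (j + (size B).+1 < size B) = false by apply/negbTE; lia.
have -> : j + (size B).+1 - size B = j.+1 by lia.
by rewrite /= nth_cat hj.
Qed.

Theorem mainTheorem2 (k : nat) (T : finType) (W : seq T) :
  3 <= k -> #|T| = k -> extremal_square_free W ->
  (Rpower (5 / 4) (INR k / 4) < INR (size W))%R.
Proof.
move=> k3 cT ext.
have sf := ext.1.
have : 0 < #|T| by rewrite cT; lia.
case/card_gt0P => x0 _.
set n := size W.
set S := [seq p <- iota 1 n | valid x0 W p].
have hS : k <= size S.
  rewrite -cT -(size_map (fun p => nth x0 W p.-1)).
  apply: leq_trans (card_size _).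
  apply: subset_leq_card; apply/subsetP => x _.
  have [p /andP[vp /eqP <-]] := key _ x0 ext x.
  apply: map_f; rewrite mem_filter vp mem_iota /=.
  move: vp => /and3P[p0 pn _]; have pn2 : p + p <= (size W).+1 := pn. apply/andP; split; lia.
have sS : sorted ltn S by apply: sorted_filter; [exact: ltn_trans| exact: iota_ltn_sorted].
have aS : all (valid x0 W) S by apply: filter_all.
case: S hS sS aS => [|a s'] hS sS aS; first by move: hS; rewrite /=; lia.
have hc := chain sf sS aS.
have /(allP aS) /and3P[_ hL _] := mem_last a s'.
move: (aS) => /= /andP[/and3P[a0 _ _] _].
set L := last a s' in hc hL.
set m := size s' in hc hS.
have hm : (k <= m.+1)%coq_nat by apply/leP.
have hk : (3 <= k)%coq_nat by apply/leP.
have H1 : (3 ^ m <= 2 ^ m * L)%coq_nat.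
  apply/leP; apply: leq_trans hc; rewrite leq_pmulr //.
have H2 : (L < n)%coq_nat.
  apply/ltP.
  have : 1 < L.
    rewrite ltnNge; apply/negP => L1.
    have : (3 ^ m <= 2 ^ m)%coq_nat.
      apply: (Nat.le_trans _ _ _ H1). apply/leP. rewrite -[X in _ <= X]muln1. rewrite leq_mul2l L1 orbT //.
    have : (2 ^ m < 3 ^ m)%coq_nat by apply: Nat.pow_lt_mono_l; lia.
    lia.
  have hL2 : L + L <= n.+1 := hL. move=> hL1; rewrite /n in hL2 *; move: hL1 hL2; clear; clearbody L; move=> h1 h2; move: (size W) h1 h2 => z h1 h2. apply/ltP; move/leP: h2; move/ltP: h1; lia.
apply le_INR in H1; rewrite mult_INR !pow_INR in H1.
apply lt_INR in H2.
have hmR : (INR k / 4 <= INR m)%R.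
  apply le_INR in hm; apply le_INR in hk. rewrite S_INR in hm. simpl in hk. lra.
apply: (Rle_lt_trans _ (Rpower (5/4) (INR m))).
  apply: Rle_Rpower => //; lra.
rewrite Rpower_pow; last lra.
apply: (Rle_lt_trans _ (INR L)) => //.
have p2 : (0 < 2 ^ m)%R by apply: pow_lt; lra.
have e : ((5/4) ^ m * 2 ^ m = (5/2) ^ m)%R by rewrite -Rpow_mult_distr; f_equal; lra.
have e2 : ((5/2) ^ m <= 3 ^ m)%R by apply: pow_incr; lra.
have i3 : INR 3 = 3%R by simpl; lra.
have i2 : INR 2 = 2%R by simpl; lra.
rewrite i3 i2 in H1.
apply: (Rmult_le_reg_r (2 ^ m)) => //.
rewrite e (Rmult_comm (INR L)); lra.
Qed.
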